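(* Let $p>1$. A scheduling policy $\eta$ is a $p$-approximation policy if it schedules jobs solely based on the requirements $[q^*_X]$ and the state $[d_X(k) : X\in S]$ of the system, and, for every frame $k$, $$\sum_{X\in S}\tilde q_X(k)\,d_X(k)\ \ge\ \frac{1}{p}\ \max_{[q_X]\text{ feasible}}\ \sum_{X\in S} q_X\, d_X(k).$$
   Context: A system consists of a finite set $S$ of tasks. Time is slotted, $t\in\{0,1,2,\dots\}$. Each task $X\in S$ has a period $\tau_X$ (a positive integer); time is partitioned into consecutive periods of $X$ of $\tau_X$ slots each, the first starting at $t=0$, and in each period $X$ has one job, removed at the end of the period. Let $T=\mathrm{lcm}\{\tau_X : X\in S\}$; time is partitioned into consecutive frames of $T$ slots each, the $k$-th frame ($k=1,2,\dots$) being the $k$-th such block starting from $t=0$. A scheduling policy (possibly randomized) chooses in each slot either to idle or to execute the job of exactly one task. Each task $X$ has rewards $r^1_X\ge r^2_X\ge\dots\ge r^{\tau_X}_X\ge 0$: executing the job of $X$ for the $i$-th time within a period yields reward $r^i_X$ to $X$. Let $s_X(t)$ be the total reward obtained by $X$ between time 0 and $t$; the average reward is $q_X=\liminf_{t\to\infty}s_X(t)/(t/T)$. Each task has a minimum requirement $q^*_X>0$; a policy fulfills the system if $q_X\ge q^*_X$ with probability 1 for all $X\in S$. The system (with requirements $[q^*_X]$) is feasible if some policy fulfills it, and strictly feasible if there is $\epsilon>0$ such that the same system with requirements $[(1+\epsilon)q^*_X]$ is feasible. A vector $[q_X : X\in S]$ is called feasible if the system with the same tasks, periods and rewards and requirements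 $[q_X]$ is feasible. For $p\ge 1$, a policy is a $p$-approximation policy if it fulfills every system with requirements $[q^*_X]$ such that the same system with requirements $[p\,q^*_X]$ is strictly feasible. Let $\tilde q_X(k)$ be the total reward obtained by $X$ during the $k$-th frame. The debt of $X$ is $d_X(0)=0$, $d_X(k)=[d_X(k-1)+q^*_X-\tilde q_X(k)]^+$ for $k>0$, with $[x]^+=\max\{x,0\}$; the state of the system at frame $k$ is $[d_X(k) : X\in S]$. *)

(* Defs.v *)
From HB Require Import structures.
From mathcomp Require Import all_boot all_order all_algebra.
From mathcomp Require Import all_classical all_reals all_analysis.
Set Implicit Arguments. Unset Strict Implicit. Unset Printing Implicit Defensive.
Import Order.TTheory GRing.Theory Num.Theory.
Local Open Scope ring_scope.

Section Sched.
Variables (R : realType) (S : finType) (tau : S -> nat) (r : S -> nat -> R).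
(* tau X = period of X (assumed > 0 in the theorem);
   r X i = reward for the i-th execution (i = 1 .. tau X) of X within a period. *)

Definition frameT : nat := \big[lcmn/1%N]_(X : S) tau X.

(* an action sequence: in slot t, idle (None) or execute the job of X (Some X) *)
Definition actseq := nat -> option S.

Definition exec_count (a : actseq) (X : S) (t : nat) : nat :=
  \sum_((t %/ tau X) * tau X <= t' < t.+1) (a t' == Some X : nat).

Definition slot_rew (a : actseq) (X : S) (t : nat) : R :=
  if a t == Some X then r X (exec_count a X t) else 0.

Definition cum_rew (a : actseq) (X : S) (t : nat) : R :=
  \sum_(0 <= t' < t) slot_rew a X t'.

Definition avg_rew (a : actseq) (X : S) : \bar R :=
  limn_einf (fun t : nat => (cum_rew a X t / (t%:R / (frameT%:R)))%:E).

Definition meets_req (a : actseq) (q : S -> R) : Prop :=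
  forall X : S, ((q X)%:E <= avg_rew a X)%E.

(* The system with requirements q is feasible: some (possibly randomized)
   policy fulfills it with probability 1.  A randomized policy is modelled as a
   random action sequence on an arbitrary probability space (the system itself
   is deterministic, so any action sequence is implementable). *)
Definition sys_feasible (q : S -> R) : Prop :=
  exists (d : measure_display) (Om : measurableType d) (P : probability Om R)
         (pol : Om -> actseq),
    {ae P, forall w, meets_req (pol w) q}.

Definition sys_strictly_feasible (q : S -> R) : Prop :=
  exists eps : R, 0 < eps /\ sys_feasible (fun X => (1 + eps) * q X).

(* reward of X during the k-th frame (k >= 1): slots (k-1)T .. kT-1 *)
Definition frame_rew (a : actseq) (X : S) (k : nat) : R :=
  \sum_((k.-1 * frameT)%N <= t < (k * frameT)%N) slot_rew a X t.

(* A state-based randomized policy: in each frame the schedule of the frame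
   (a map from slot offsets 0..T-1 to actions) is chosen as a function of the
   requirements, the current state (debts) and a fresh random seed u : U. *)
Definition sb_policy (U : Type) := (S -> R) -> (S -> R) -> U -> (nat -> option S).

Section Traj.
Variables (U : Type) (eta : sb_policy U) (q : S -> R) (seed : nat -> U).

(* actions generated when the debt at the start of frame k+1 is D k *)
Definition act_of (D : nat -> S -> R) : actseq :=
  fun t => eta q (D (t %/ frameT)%N) (seed (t %/ frameT)%N) (t %% frameT)%N.

(* debts d_X(k): d(0) = 0, d(k) = [d(k-1) + q_X - qtilde_X(k)]^+.
   The reward of frame k.+1 only depends on the actions of that frame
   (periods divide T), which are determined by d(k). *)
Fixpoint debt (k : nat) : S -> R :=
  match k with
  | 0 => fun _ => 0
  | k'.+1 => fun X =>
      Num.max (debt k' X + q X - frame_rew (act_of (fun _ => debt k')) X k) 0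
  end.

Definition traj : actseq := act_of debt.

End Traj.
End Sched.

(* Main.v *)
Require Import Defs.
From HB Require Import structures.
From mathcomp Require Import all_boot all_order all_algebra.
From mathcomp Require Import all_classical all_reals all_analysis.
Import Order.TTheory GRing.Theory Num.Theory.
Local Open Scope ring_scope.
Set Implicit Arguments.

Section Basic.
Variables (R : realType) (S : finType) (tau : S -> nat) (r : S -> nat -> R).
Hypothesis tau_gt0 : forall X : S, (0 < tau X)%N.
Hypothesis r_mono : forall X : S, forall i j : nat, (1 <= i)%N -> (i <= j)%N -> (j <= tau X)%N ->
       r X j <= r X i.
Hypothesis r_ge0 : forall X : S, forall i : nat, (1 <= i)%N -> (i <= tau X)%N -> 0 <= r X i.

Lemma T_gt0 : (0 < frameT tau)%N.
Proof.
rewrite /frameT; apply: (big_ind (fun n => 0 < n)%N) => //.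
by move=> x y Hx Hy; rewrite lcmn_gt0 Hx Hy.
Qed.

Lemma tau_dvd X : (tau X %| frameT tau)%N.
Proof. by apply: (biglcmn_sup X). Qed.

Lemma exec_count_bnd a X t : a t = Some X ->
  (1 <= exec_count tau a X t <= tau X)%N.
Proof.
move=> Ha; rewrite /exec_count; apply/andP; split.
  rewrite big_nat_recr /=; last exact: leq_divM.
  by rewrite Ha eqxx addn1.
set m := (t %/ tau X * tau X)%N.
have H : (\sum_(m <= t' < t.+1) (a t' == Some X : nat) <= \sum_(m <= t' < t.+1) 1)%N.
  by apply: leq_sum => i _; case: (_ == _).
apply: (leq_trans H).
rewrite sum_nat_const_nat muln1.
rewrite /m {1}(div.divn_eq t (tau X)) -addnS addKn.
exact: ltn_pmod.
Qed.

Lemma slot_rew_ge0 a X t : 0 <= slot_rew tau r a X t.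
Proof.
rewrite /slot_rew; case: eqP => // /exec_count_bnd /andP[H1 H2]; exact: r_ge0.
Qed.

Lemma slot_rew_le a X t : slot_rew tau r a X t <= r X 1%N.
Proof.
rewrite /slot_rew; case: eqP => [/exec_count_bnd /andP[H1 H2]|_].
  by apply: r_mono.
by apply: r_ge0 => //; exact: tau_gt0.
Qed.

Lemma frame_rew_ge0 a X k : 0 <= frame_rew tau r a X k.
Proof. by apply: sumr_ge0 => i _; exact: slot_rew_ge0. Qed.

Lemma frame_rew_le a X k :
  frame_rew tau r a X k.+1 <= (frameT tau)%:R * r X 1%N.
Proof.
rewrite /frame_rew /=.
apply: (le_trans (ler_sum _ (fun i _ => slot_rew_le a X i))).
by rewrite sumr_const_nat mulSn addnK mulr_natl.
Qed.

Lemma cum_frames a X k :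
  cum_rew tau r a X (k * frameT tau) = \sum_(j < k) frame_rew tau r a X j.+1.
Proof.
elim: k => [|k IH]; first by rewrite big_ord0 /cum_rew mul0n big_geq.
rewrite big_ord_recr /= -IH /cum_rew /frame_rew /=.
by rewrite (big_cat_nat _ (n := (k * frameT tau)%N)) //= leq_mul2r leqnSn orbT.
Qed.

Lemma cum_mono a X t t' : (t <= t')%N -> cum_rew tau r a X t <= cum_rew tau r a X t'.
Proof.
move=> Htt; rewrite /cum_rew [X in _ <= X](big_cat_nat _ (n := t)) //= lerDl.
by apply: sumr_ge0 => i _; exact: slot_rew_ge0.
Qed.

Lemma slot_rew_ext a b X t :
  (forall t', (t %/ tau X * tau X <= t' <= t)%N -> a t' = b t') ->
  slot_rew tau r a X t = slot_rew tau r b X t.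
Proof.
move=> Hab; rewrite /slot_rew /exec_count Hab ?leq_divM ?leqnn //.
congr (if _ then r X _ else _); apply: eq_big_nat => i Hi.
by rewrite Hab.
Qed.

Lemma frame_traj U (eta : sb_policy R S U) q seed k X :
  frame_rew tau r (traj tau r eta q seed) X k.+1 =
  frame_rew tau r (act_of tau eta q seed (fun _ => debt tau r eta q seed k)) X k.+1.
Proof.
rewrite /frame_rew /=; apply: eq_big_nat => t /andP[H1 H2].
apply: slot_rew_ext => t' /andP[H3 H4].
have HT := T_gt0.
have Hk : (t' %/ frameT tau)%N = k.
  apply/eqP; rewrite eqn_leq -ltnS ltn_divLR // leq_divRL //.
  rewrite (leq_ltn_trans H4 H2) /=.
  apply: (leq_trans _ H3).
  rewrite -(divnK (dvdn_mull k (tau_dvd X))) leq_mul2r.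
  by rewrite leq_div2r ?orbT.
by rewrite /traj /act_of Hk.
Qed.

End Basic.
From mathcomp Require Import ring lra.
Lemma term_le_sum (R : realType) (S : finType) (f : S -> R) X :
  (forall Y, 0 <= f Y) -> f X <= \sum_Y f Y.
Proof. by move=> H; rewrite (bigD1 X) //= lerDl sumr_ge0. Qed.

Lemma bounded_debt (R : realType) (S : finType) (d qt : nat -> S -> R) (qs B : S -> R) (eps : R) :
 0 < eps -> (forall X, 0 < qs X) -> (forall k X, 0 <= qt k X) -> (forall k X, qt k X <= B X) ->
 (forall X, d 0%N X = 0) ->
 (forall k X, d k.+1 X = Num.max (d k X + qs X - qt k X) 0) ->
 (forall k, \sum_X (1+eps) * qs X * d k X <= \sum_X qt k X * d k X) ->
 exists M, forall k X, d k X <= M.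
Proof.
move=> eps0 qs0 qt0 qtB d0 drec Hrat.
have dge0 : forall k X, 0 <= d k X.
  by case=> [|k] X; [rewrite d0 | rewrite drec le_max lexx orbT].
pose C := \sum_X (qs X + B X)^+2.
pose L0 := \sum_X (C / (2 * eps * qs X))^+2.
pose L k := \sum_X d k X ^+ 2.
have C0 : 0 <= C by apply: sumr_ge0 => X _; exact: sqr_ge0.
have L00 : 0 <= L0 by apply: sumr_ge0 => X _; exact: sqr_ge0.
have step : forall k, L k.+1 <= L k - 2 * eps * \sum_X qs X * d k X + C.
  move=> k.
  have perX : forall X, d k.+1 X ^+ 2 <= d k X ^+ 2 + 2 * (qs X * d k X)
       - 2 * (qt k X * d k X) + (qs X + B X) ^+ 2.
    move=> X; rewrite drec.
    have h1 := qs0 X; have h2 := qt0 k X; have h3 := qtB k X; have h4 := dge0 k X.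
    have : Num.max (d k X + qs X - qt k X) 0 ^+ 2 <= (d k X + qs X - qt k X) ^+ 2.
      by case: (lerP 0 (d k X + qs X - qt k X)) => h //; rewrite expr0n /= sqr_ge0.
    move=> H; apply: (le_trans H); nra.
  apply: (le_trans (ler_sum _ (fun X _ => perX X))).
  rewrite !big_split /= sumrN -!mulr_sumr.
  have H := Hrat k.
  rewrite (eq_bigr (fun X => (1+eps) * (qs X * d k X))) in H; last by move=> X _; rewrite mulrA.
  rewrite -mulr_sumr in H.
  rewrite /L /C; lra.
have Lge0 : forall k, 0 <= L k by move=> k; apply: sumr_ge0 => X _; exact: sqr_ge0.
have claim : forall k, L k <= L0 + C.
  elim=> [|k IH].
    rewrite /L big1 ?addr_ge0 // => X _; by rewrite d0 expr0n.
  set A := \sum_X qs X * d k X.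
  have A0 : 0 <= A by apply: sumr_ge0 => X _; apply: mulr_ge0; [exact: ltW|].
  have sk := step k; rewrite -/A in sk.
  case: (lerP (C / (2 * eps)) A) => hA.
    have : C <= 2 * eps * A.
      by rewrite -ler_pdivrMl ?mulr_gt0 // mulrC.
    lra.
  have LkL0 : L k <= L0.
    apply: ler_sum => X _.
    have hX : d k X <= C / (2 * eps * qs X).
      rewrite invfM mulrA ler_pdivlMr //.
      apply: (le_trans _ (ltW hA)); rewrite mulrC /A.
      apply: (@term_le_sum R S (fun Y => qs Y * d k Y) X) => Y.
      by apply: mulr_ge0; [exact: ltW|].
    have h0 := dge0 k X.
    by rewrite !expr2; apply: ler_pM.
  have : 0 <= eps * A by apply: mulr_ge0 => //; exact: ltW.
  lra.
exists (1 + L0 + C) => k X.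
have h1 : d k X ^+ 2 <= L k.
  by apply: (@term_le_sum R S (fun Y => d k Y ^+ 2) X) => Y; exact: sqr_ge0.
have h2 := claim k; have h3 := dge0 k X.
have : d k X <= 1 + d k X ^+ 2 by rewrite expr2; nra.
lra.
Qed.
Lemma tele (R : realType) (S : finType) (d qt : nat -> S -> R) (qs : S -> R) :
 (forall X, d 0%N X = 0) ->
 (forall k X, d k.+1 X = Num.max (d k X + qs X - qt k X) 0) ->
 forall k X, k%:R * qs X - d k X <= \sum_(j < k) qt j X.
Proof.
move=> d0 drec; elim=> [|k IH] X; first by rewrite big_ord0 d0 mul0r subr0.
rewrite big_ord_recr /= -natr1 drec.
have := IH X; have : d k X + qs X - qt k X <= Num.max (d k X + qs X - qt k X) 0.
  by rewrite le_max lexx.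
lra.
Qed.

Lemma final_arith (R : realType) (c y K nr qs M e : R) :
  0 < y -> 0 < K -> 0 < qs -> 0 < e -> nr * qs - M <= c -> y - K <= nr * K ->
  K * qs + M * K <= e * y -> qs - e <= c / (y / K).
Proof.
move=> y0 K0 qs0 e0 h1 h2 h3.
have -> : c / (y / K) = c * K / y by field; apply/andP; split; rewrite gt_eqF.
rewrite ler_pdivlMr //.
have : (nr * qs - M) * K <= c * K by rewrite ler_pM2r.
have : (y - K) * qs <= nr * K * qs by rewrite ler_pM2r.
nra.
Qed.
Lemma liminf_ge (R : realType) (u : nat -> R) (x : R) :
  (forall e : R, 0 < e -> exists N, forall n, (N <= n)%N -> x - e <= u n) ->
  (x%:E <= limn_einf (fun n => (u n)%:E))%E.
Proof.
move=> H; rewrite limn_einf_lim (cvg_lim _ (@cvg_einfs_sup _ _)) //.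
apply/lee_subgt0Pr => e e0; have [N HN] := H e e0.
apply: (le_trans _ (ereal_sup_ubound _)); last by exists N.
apply: le_ereal_inf_tmp => _ [m /= Nm <-]; rewrite -EFinD lee_fin; exact: HN.
Qed.

Unset Implicit Arguments.

Theorem theorem6 (R : realType) (S : finType) (tau : S -> nat) (r : S -> nat -> R)
    (p : R) (U : Type) (dU : measure_display) (Om : measurableType dU)
    (P : probability Om R) (seed : Om -> nat -> U) (eta : sb_policy R S U) :
  (forall X : S, (0 < tau X)%N) ->
  (forall X : S, forall i j : nat, (1 <= i)%N -> (i <= j)%N -> (j <= tau X)%N ->
       r X j <= r X i) ->
  (forall X : S, forall i : nat, (1 <= i)%N -> (i <= tau X)%N -> 0 <= r X i) ->
  1 < p ->
  (* state-based condition, for all requirements, realizations and frames k+1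
     (decided at state d(k)) *)
  (forall (qs : S -> R) (w : Om) (k : nat), (forall X, 0 < qs X) ->
     let d := debt tau r eta qs (seed w) k in
     ((p^-1)%:E * ereal_sup [set (\sum_(X : S) q X * d X)%:E | q in sys_feasible tau r]
       <= (\sum_(X : S) frame_rew tau r (traj tau r eta qs (seed w)) X k.+1 * d X)%:E)%E) ->
  (* conclusion: eta is a p-approximation policy *)
  forall qs : S -> R, (forall X, 0 < qs X) ->
    sys_strictly_feasible tau r (fun X => p * qs X) ->
    {ae P, forall w, meets_req tau r (traj tau r eta qs (seed w)) qs}.
Proof.
move=> tau0 rmono rge0 p1 Hst qs qs0 [eps [eps0 Hfeas]].
apply: aeW => w.
pose d k := debt tau r eta qs (seed w) k.
pose qt k X := frame_rew tau r (traj tau r eta qs (seed w)) X k.+1.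
have p0 : 0 < p by apply: lt_trans p1.
have d0 : forall X, d 0%N X = 0 by [].
have drec : forall k X, d k.+1 X = Num.max (d k X + qs X - qt k X) 0.
  by move=> k Y; rewrite /qt (frame_traj tau r tau0).
have dge0 : forall k X, 0 <= d k X.
  by case=> [|k] X; [rewrite d0 | rewrite drec le_max lexx orbT].
have Hrat : forall k, \sum_X (1+eps) * qs X * d k X <= \sum_X qt k X * d k X.
  move=> k; have := Hst qs w k qs0; rewrite /= -/(d k).
  set E := \sum_X ((1+eps) * (p * qs X)) * d k X.
  have E0 : 0 <= E.
    apply: sumr_ge0 => X _; apply: mulr_ge0 => //.
    by apply: mulr_ge0; [lra | apply: mulr_ge0; [exact: ltW | exact: ltW]].
  have Emem : (E%:E <= ereal_sup [set (\sum_(X : S) q X * d k X)%:E | q in sys_feasible tau r])%E.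
    by apply: ereal_sup_ubound; exists (fun X => (1 + eps) * (p * qs X)).
  have H1 : ((p^-1)%:E * E%:E <= (p^-1)%:E * ereal_sup [set (\sum_(X : S) q X * d k X)%:E | q in sys_feasible tau r])%E.
    by apply: lee_pmul => //; rewrite lee_fin invr_ge0 ltW.
  move=> H2; have := le_trans H1 H2; rewrite -EFinM lee_fin.
  apply: le_trans; rewrite /E mulr_sumr le_eqVlt; apply/orP; left; apply/eqP.
  apply: eq_bigr => X _; field; lra.
have [M HM] := @bounded_debt R S d qt qs (fun X => (frameT tau)%:R * r X 1%N) eps eps0 qs0
  (fun k X => frame_rew_ge0 R tau r tau0 rge0 _ X k.+1)
  (fun k X => frame_rew_le R tau r tau0 rmono rge0 _ X k) d0 drec Hrat.
move=> X.
have M0 : 0 <= M by have := HM 0%N X; rewrite d0.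
rewrite /avg_rew; apply: liminf_ge => e e0.
have HT := T_gt0 S tau tau0.
set K := ((frameT tau)%:R : R).
have K0 : 0 < K by rewrite ltr0n.
set c0 := K * qs X + M * K.
have c00 : 0 <= c0 / e.
  have := qs0 X; rewrite /c0 => h.
  apply: divr_ge0; last exact: ltW.
  by apply: addr_ge0; apply: mulr_ge0 => //; exact: ltW.
exists (Num.Def.archi_bound (c0 / e)).+1 => t Ht.
have Hb := archi_boundP c00.
have tb : c0 / e < t%:R.
  by apply: (lt_le_trans Hb); rewrite ler_nat ltnW.
have t0 : 0 < (t%:R : R) by apply: le_lt_trans tb.
pose n := (t %/ frameT tau)%N.
apply: (@final_arith R _ _ K n%:R (qs X) M e) => //.
- apply: (le_trans _ (cum_mono R tau r tau0 rge0 _ X _ _ (leq_divM t (frameT tau)))).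
  rewrite (cum_frames R tau r) /=.
  apply: le_trans (tele R S d qt qs d0 drec n X); rewrite lerD2l lerN2; exact: HM.
- have : (t < n * frameT tau + frameT tau)%N.
    by rewrite {1}(div.divn_eq t (frameT tau)) ltn_add2l ltn_pmod.
  rewrite -(ltr_nat R) natrD natrM -/K => h; lra.
- by move: (ltW tb); rewrite ?ler_pdivrMl ?ler_pdivrMr ?ler_pdivlMl ?ler_pdivlMr // mulrC.
Qed.
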